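(* Let $G$ be a finite group and $p$ a fixed prime divisor of $|G|$. Then every self-centralizing subgroup of $G$ is a TI-subgroup of $G$ or subnormal in $G$ or has $p'$-order if and only if every subgroup of $G$ is a TI-subgroup of $G$ or subnormal in $G$ or has $p'$-order.
   Context: All groups are finite. A subgroup $H$ of a group $G$ is a TI-subgroup of $G$ if for every $g\in G$, $H^g\cap H=1$ or $H^g\cap H=H$. A subgroup $H$ of $G$ is self-centralizing in $G$ if $C_G(H)\leq H$. A subgroup has $p'$-order if its order is not divisible by $p$. *)

(* Defs.v *)
From mathcomp Require Import all_boot all_fingroup all_solvable.
Set Implicit Arguments. Unset Strict Implicit. Unset Printing Implicit Defensive.
Local Open Scope group_scope.

Definition TI_subgroup (gT : finGroupType) (H G : {group gT}) : Prop :=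
  forall g, g \in G -> (H :^ g :&: H = 1) \/ (H :^ g :&: H = H).

Definition self_centralizing (gT : finGroupType) (H G : {group gT}) : Prop :=
  'C_G(H) \subset H.

Definition TI_sn_p' (gT : finGroupType) (p : nat) (H G : {group gT}) : Prop :=
  TI_subgroup H G \/ H <|<| G \/ ~~ (p %| #|H|).

(* Main.v *)
Require Import Defs.
From mathcomp Require Import all_boot all_fingroup all_solvable.
From mathcomp Require Import ssralg zmodp vcharacter mxabelem mxrepresentation.
Set Implicit Arguments. Unset Strict Implicit. Unset Printing Implicit Defensive.
Local Open Scope group_scope.

Lemma Frob_compl_abelian_cyclic (gT : finGroupType) (G M Y : {group gT}) :
  [Frobenius G with complement M] -> Y \subset M -> abelian Y -> cyclic Y.
Proof.
move=> frobG sYM abY.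
have [N frobN] := Frobenius_kernel_exists frobG.
have [defG ntN _ _ _] := Frobenius_context frobN.
have regN := Frobenius_reg_ker frobN.
have coNM := Frobenius_coprime frobN.
have [nsNG sMG _ _ _] := sdprod_context defG.
have nNY : Y \subset 'N(N).
  by apply: subset_trans (normal_norm nsNG); apply: subset_trans sMG.
have coNY : coprime #|N| #|Y| by apply: coprimegS sYM coNM.
pose q := pdiv #|N|.
have q_pr : prime q by rewrite pdiv_prime // ltnNge -trivg_card_le1.
have [Q sylQ nQY] := sol_coprime_Sylow_exists q (abelian_sol abY) nNY coNY.
have ntQ : Q :!=: 1.
  rewrite -cardG_gt1 (card_Hall sylQ) p_part_gt1 pi_pdiv cardG_gt1 //.
have [W minW sWQ] := minnormal_exists ntQ nQY.
have solQ : solvable Q := pgroup_sol (pHall_pgroup sylQ).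
have [nWY ntW /is_abelemP[r r_pr abW]] := minnormal_solvable minW sWQ solQ.
have sWN : W \subset N := subset_trans sWQ (pHall_sub sylQ).
have cYW : 'C_Y(W) = 1.
  apply/trivgP/subsetP => x /setIP[Yx cWx].
  rewrite inE; apply/negPn/negP => ntx.
  have Mx : x \in M^# by rewrite !inE ntx (subsetP sYM).
  have := regN x Mx; move/eqP; apply/negP.
  apply: contra ntW => /eqP CN1; rewrite -subG1 -CN1 subsetI sWN.
  apply/subsetP=> w Ww; apply/cent1P; apply: commute_sym; exact: (centP cWx).
pose rG := abelem_repr abW ntW nWY.
apply: (@mx_faithful_irr_abelian_cyclic [the fieldType of 'F_r] _ _ _ rG) => //.
  exact: abelem_mx_faithful.
by apply/abelem_mx_irrP.
Qed.

Section Main.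
Variables (gT : finGroupType) (G : {group gT}) (p : nat).
Hypothesis p_pr : prime p.
Hypothesis HS : forall H : {group gT}, H \subset G -> self_centralizing H G -> TI_sn_p' p H G.
Variable H : {group gT}.
Hypotheses (sHG : H \subset G) (pH : p %| #|H|) (nsnH : ~~ (H <|<| G)).

Lemma step1 (L : {group gT}) g :
  H \subset L -> L \subset G -> L \subset 'N(H) -> 'C_G(L) \subset L ->
  g \in G -> H :^ g :&: H != 1 -> L :^ g = L.
Proof.
move=> sHL sLG nHL scL Gg ntD.
have [TI|[snL|p'L]] := HS sLG scL.
- have [E1|E2] := TI g Gg.
    case/negP: ntD; rewrite -subG1 -E1.
    by apply: setISS => //; rewrite conjSg.
  apply/eqP; rewrite eq_sym eqEcard cardJg leqnn andbT.
  by rewrite -{1}E2 subsetIl.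
- case/negP: nsnH; apply: subnormal_trans snL.
  by apply: normal_subnormal; rewrite /normal sHL nHL.
- by case/negP: p'L; apply: dvdn_trans pH (cardSg sHL).
Qed.


Let C := 'C_G(H)%G.
Let K := (H <*> C)%G.

Lemma nHC : C \subset 'N(H).
Proof. exact: subset_trans (subsetIr _ _) (cent_sub _). Qed.

Lemma cHC : C \subset 'C(H).
Proof. exact: subsetIr. Qed.

Lemma sCG : C \subset G.
Proof. exact: subsetIl. Qed.

Lemma sKG : K \subset G.
Proof. by rewrite join_subG sHG sCG. Qed.

Lemma nHK : K \subset 'N(H).
Proof. by rewrite join_subG normG nHC. Qed.

Lemma sHK : H \subset K. Proof. exact: joing_subl. Qed.
Lemma sCK : C \subset K. Proof. exact: joing_subr. Qed.

Lemma scK (L : {group gT}) : K \subset L -> 'C_G(L) \subset L.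
Proof.
move=> sKL; apply: subset_trans (subset_trans sCK sKL).
by apply: setIS; apply: centS; apply: subset_trans sHK sKL.
Qed.

Lemma nsnK (L : {group gT}) : H \subset L -> L \subset 'N(H) -> ~~ (L <|<| G).
Proof.
move=> sHL nHL; apply: contra nsnH => snL; apply: subnormal_trans snL.
by apply: normal_subnormal; rewrite /normal sHL nHL.
Qed.

Lemma TI_over (L : {group gT}) : K \subset L -> L \subset G -> ~~ (L <|<| G) ->
  TI_subgroup L G.
Proof.
move=> sKL sLG nsnL; have [//|[snL|p'L]] := HS sLG (scK sKL).
  by rewrite snL in nsnL.
by case/negP: p'L; apply: dvdn_trans pH (cardSg (subset_trans sHK sKL)).
Qed.

Lemma ntH : H :!=: 1.
Proof.
apply/eqP=> H1; move: pH; rewrite H1 cards1 dvdn1 => /eqP p1.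
by move: p_pr; rewrite p1.
Qed.

Definition Pm (L : {group gT}) := [&& K \subset L, L \subset G & ~~ (L <|<| G)].

Lemma PmK : Pm K.
Proof. by rewrite /Pm subxx sKG (nsnK sHK nHK). Qed.

Lemma frob_exists : {M : {group gT} | K \subset M & [Frobenius G with complement M]}.
Proof.
have [M maxM sKM] := maxgroup_exists PmK.
exists M => //.
have [/and3P[_ sMG nsnM] maxMP] := maxgroupP maxM.
have NM : 'N_G(M) = M.
  apply: maxMP; last by rewrite subsetI sMG normG.
  rewrite /Pm subsetIl (subset_trans sKM) ?subsetI ?sMG ?normG //=.
  apply: contra nsnM => snN; apply: subnormal_trans snN.
  exact: normal_subnormal (normalSG sMG).
have TIM := TI_over sKM sMG nsnM.
have ntM : M :!=: 1.
  by apply: contra ntH; rewrite -!subG1 => /(subset_trans (subset_trans sHK sKM)).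
apply/andP; split.
  by apply: contra nsnM => /eqP->; apply: subnormal_refl.
apply/normedTI_P; split.
- by rewrite setD_eq0 subG1.
- by rewrite normD1 subsetI sMG normG.
move=> g Gg /pred0Pn[x /andP[/= Mx Mgx]].
have [E1|E2] := TIM g Gg.
  have : x \in M :^ g :&: M.
    have sMg : M^# :^ g \subset M :^ g by rewrite conjSg subsetDl.
    rewrite inE (subsetP sMg x Mgx) /=.
    by move: Mx; rewrite !inE => /andP[].
  by rewrite E1 inE; move: Mx; rewrite !inE => /andP[/negbTE->].
rewrite -NM inE Gg; apply/normP; apply/eqP.
by rewrite eq_sym eqEcard cardJg leqnn andbT -{1}E2 subsetIl.
Qed.


Let Z0 := 'Z(C)%G.

Definition Pab (X : {group gT}) := abelian X && (X \subset C).

Lemma maxab_cent (X : {group gT}) z : maxgroup X Pab -> z \in C -> z \in 'C(X) -> z \in X.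
Proof.
move=> maxX Cz cXz; have [/andP[abX sXC] maxXP] := maxgroupP maxX.
have <- : X <*> <[z]> = X.
  apply: (maxXP (X <*> <[z]>)%G); last exact: joing_subl.
  by rewrite /Pab abelianY abX cycle_abelian join_subG sXC cycle_subG cXz cycle_subG.
by rewrite mem_gen // inE cycle_id orbT.
Qed.

Lemma stepZ g : g \in G -> H :^ g :&: H != 1 -> H :^ g \subset H <*> Z0 /\ C :^ g = C.
Proof.
move=> Gg ntD.
have KgK := step1 sHK sKG nHK (scK (subxx K)) Gg ntD.
have sHgK : H :^ g \subset K by rewrite -KgK conjSg sHK.
have sHgA : H :^ g \subset H <*> Z0.
  apply/subsetP=> k Hgk.
  have := subsetP sHgK k Hgk; rewrite /K /= (norm_joinEr nHC).
  case/mulsgP=> h y Hh Cy ek.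
  have Zy : y \in Z0.
    rewrite /Z0 /= inE Cy; apply/centP=> c Cc.
    have PC : Pab <[c]>%G by rewrite /Pab cycle_abelian cycle_subG.
    have [X maxX sCX] := @maxgroup_exists _ Pab <[c]>%G PC.
    have [/andP[abX sXC] _] := maxgroupP maxX.
    have cHX : X \subset 'C(H) := subset_trans sXC cHC.
    have sHL : H \subset H <*> X := joing_subl _ _.
    have sLG : H <*> X \subset G by rewrite join_subG sHG (subset_trans sXC sCG).
    have nHL : H <*> X \subset 'N(H).
      by rewrite join_subG normG (subset_trans cHX (cent_sub _)).
    have scL : 'C_G(H <*> X) \subset H <*> X.
      apply/subsetP=> w /setIP[Gw cLw].
      have Cw : w \in C by rewrite inE Gw (subsetP (centS sHL)).
      have cXw : w \in 'C(X) := subsetP (centS (joing_subr H X)) w cLw.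
      by rewrite (subsetP (joing_subr H X)) // (maxab_cent maxX).
    have LgL := step1 (L := (H <*> X)%G) sHL sLG nHL scL Gg ntD.
    have : h * y \in H <*> X.
      have sHgL : H :^ g \subset H <*> X.
        have e1 : H :^ g \subset (H <*> X)%G :^ g by rewrite conjSg.
        by rewrite LgL in e1.
      by rewrite -ek (subsetP sHgL).
    rewrite (cent_joinEr cHX) => /mulsgP[h' x Hh' Xx ekx].
    pose u := h^-1 * h'.
    have Hu : u \in H by rewrite groupM ?groupV.
    have ey : y = u * x by rewrite /u -mulgA -ekx mulKg.
    have Cu : u \in C.
      have -> : u = y * x^-1 by rewrite ey mulgK.
      by rewrite groupM ?groupV // (subsetP sXC).
    have cXu : u \in 'C(X) by apply: (subsetP _ u Hu); rewrite centsC.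
    have Xu := maxab_cent maxX Cu cXu.
    have Xy : y \in X by rewrite ey groupM.
    have Xc : c \in X := subsetP sCX c (cycle_id c).
    exact: (centP (subsetP abX y Xy)) c Xc.
  by rewrite ek groupM // mem_gen // inE ?Hh ?Zy ?orbT.
split=> //.
have sCC : C \subset C :^ g.
  rewrite /C /= conjIg -centJ (conjGid Gg) subsetI subsetIl /=.
  apply: subset_trans (centS sHgA); rewrite centY subsetI subsetIr /=.
  by rewrite centsC /Z0 /= subsetIr.
by apply/eqP; rewrite eq_sym eqEcard sCC cardJg leqnn.
Qed.




Lemma TI_H : TI_subgroup H G.
Proof.
have [M sKM frobM] := frob_exists.
move=> g Gg.
case: (eqVneq (H :^ g :&: H) 1) => [->|ntD]; [by left | right].
have [sHgA CgC] := stepZ Gg ntD.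
have ntD' : H :^ g^-1 :&: H != 1.
  by rewrite -(conjsg_eq1 _ g) conjIg conjsgKV setIC.
have [sHg'A _] := stepZ (groupVr Gg) ntD'.
have Z0g : Z0 :^ g = Z0.
  by rewrite /Z0 /= /center conjIg -centJ CgC.
have sHA' : H \subset H :^ g <*> Z0.
  by move: sHg'A; rewrite -(conjSg _ _ g) conjsgKV conjYg Z0g.
have sZC : Z0 \subset C by exact: subsetIl.
have cZH : Z0 \subset 'C(H) := subset_trans sZC cHC.
have cZHg : Z0 \subset 'C(H :^ g).
  have sCC : C \subset C :^ g by rewrite CgC.
  rewrite centJ; apply: subset_trans sZC _; apply: subset_trans sCC _.
  by rewrite conjSg subsetIr.
have eA : H :^ g <*> Z0 = H <*> Z0.
  apply/eqP; rewrite eqEsubset !join_subG sHgA sHA' !joing_subr //.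
apply/setIidPr/subsetP => h Hh.
pose Y := (<[h]> <*> Z0)%G.
have sHM : H \subset M := subset_trans sHK sKM.
have sYM : Y \subset M.
  by rewrite join_subG cycle_subG (subsetP sHM) //= (subset_trans sZC (subset_trans sCK sKM)).
have abY : abelian Y.
  rewrite abelianY cycle_abelian center_abelian /=.
  by apply: (subset_trans cZH); apply: centS; rewrite cycle_subG.
have cycY := Frob_compl_abelian_cyclic frobM sYM abY.
have sYA : Y \subset H <*> Z0.
  by rewrite join_subG cycle_subG (subsetP (joing_subl _ _)) // joing_subr.
have eYH : Y * H = H <*> Z0.
  apply/eqP; rewrite eqEsubset mul_subG ?joing_subl //=.
  rewrite joingC (cent_joinEl cZH) mulSg //; exact: joing_subr.
have eYHg : Y * H :^ g = H <*> Z0.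
  apply/eqP; rewrite eqEsubset mul_subG //=.
  rewrite -eA joingC (cent_joinEl cZHg) mulSg //; exact: joing_subr.
have e1 := mul_cardG Y H.
have e2 := mul_cardG Y (H :^ g)%G.
rewrite /= eYHg cardJg in e2; rewrite /= eYH in e1.
have ecard : #|Y :&: H| = #|Y :&: H :^ g|.
  by apply/eqP; rewrite -(eqn_pmul2l (cardG_gt0 (H <*> Z0)%G)) -e1 -e2.
have := eq_subG_cyclic cycY (subsetIl Y H) (subsetIl Y (H :^ g)%G).
rewrite /= ecard eqxx => /eqP eYY.
have : h \in Y :&: H by rewrite inE Hh andbT (subsetP (joing_subl _ _) h (cycle_id h)).
by rewrite eYY => /setIP[].
Qed.

End Main.

Theorem theorem1p5 (gT : finGroupType) (G : {group gT}) (p : nat) :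
  prime p -> p %| #|G| ->
  (forall H : {group gT}, H \subset G -> self_centralizing H G -> TI_sn_p' p H G) <->
  (forall H : {group gT}, H \subset G -> TI_sn_p' p H G).
Proof.
move=> p_pr pG; split=> [HS H sHG | HS H sHG _]; last exact: HS.
rewrite /TI_sn_p'.
case: (boolP (p %| #|H|)) => pH; last by right; right.
case: (boolP (H <|<| G)) => snH; first by right; left.
by left; apply: (@TI_H gT G p p_pr HS H sHG pH snH).
Qed.
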